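(* Let $V$ be a finite-dimensional vector space of dimension $n$ over a field $\mathbb{K}$ of characteristic $0$, and let $R=\mathbb{K}[x_1,\dots,x_n,y_1,\dots,y_n,z_1,\dots,z_n]$. Let $J_1(V)=(\mathbf{y},\mathbf{z})$, $J_2(V)=(\mathbf{x},\mathbf{z})$, $J_3(V)=(\mathbf{x},\mathbf{y})$, where $(\mathbf{x},\mathbf{y})$ denotes the ideal generated by $x_1,\dots,x_n,y_1,\dots,y_n$, etc. Then the ideal $$\mathcal{I}_{\mathcal{A}}(V)=J_1(V)\cap J_2(V)\cap J_3(V)$$ has Castelnuovo–Mumford regularity two.
   Context: This is the intersection ideal associated with the arrangement $\mathcal{A}$ of the three coordinate axes in $\mathbb{K}^3$, tensored with $V^*$. The Castelnuovo–Mumford regularity of a graded $R$-module $M$ is the least $s$ such that $\operatorname{Tor}_i^R(M,\mathbb{K})$ vanishes in degrees $>s+i$ for all $i$. *)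

(* Defs.v *)
From HB Require Import structures.
From mathcomp Require Import all_boot all_order all_algebra.
From mathcomp Require Import mpoly.
Set Implicit Arguments. Unset Strict Implicit. Unset Printing Implicit Defensive.
Import Order.TTheory GRing.Theory Num.Theory.
Local Open Scope ring_scope.

Section Defs.
Variable (K : fieldType) (N : nat).
Local Notation R := {mpoly K[N]}.

Definition homogeneous (d : nat) (p : R) : Prop :=
  forall m, m \in msupp p -> mdeg m = d.

Definition var_ideal (S : pred 'I_N) (p : R) : Prop :=
  exists c : 'I_N -> R, p = \sum_(v < N | S v) c v * 'X_v.

(* Koszul complex K(X_0..X_{N-1}; R) tensored with an ideal I (seen as a
   graded R-module).  A chain is F : {set 'I_N} -> R, F S being the
   coefficient of e_S.  Differential:
   d(e_S (x) f) = sum_{k in S} (-1)^{#{l in S | l < k}} X_k e_{S\k} (x) f. *)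
Definition koszul_d (F : {set 'I_N} -> R) (T : {set 'I_N}) : R :=
  \sum_(k < N | k \notin T)
     (-1) ^+ #|[set l in T | (l < k)%N]| * 'X_k * F (k |: T).

(* F is a chain of K(x) (x) I of homological degree i and internal degree j:
   supported on sets of size i, with coefficients in I homogeneous of
   degree j - i (internal degree of e_S (x) f is |S| + deg f). *)
Definition koszul_chain (I : R -> Prop) (i j : nat) (F : {set 'I_N} -> R) : Prop :=
  forall S : {set 'I_N},
    I (F S) /\
    (if #|S| == i then (i <= j)%N \/ F S = 0 else F S = 0) /\
    homogeneous (j - i) (F S).

(* Tor_i^R(I, K)_j = 0, computed as the degree-j part of the i-th homology of
   the Koszul complex (the graded free resolution of K = R/(X)) tensored with I. *)
Definition tor_vanishes (I : R -> Prop) (i j : nat) : Prop :=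
  forall F, koszul_chain I i j F -> koszul_d F =1 (fun _ => 0) ->
    exists G, koszul_chain I i.+1 j G /\ koszul_d G =1 F.

Definition reg_bound (I : R -> Prop) (s : int) : Prop :=
  forall i j : nat, (s + i%:Z < j%:Z)%R -> tor_vanishes I i j.

Definition cm_regularity_is (I : R -> Prop) (s : int) : Prop :=
  reg_bound I s /\ forall s', reg_bound I s' -> (s <= s')%R.

End Defs.

(* R = K[x_1..x_n, y_1..y_n, z_1..z_n] is {mpoly K[3 * n]}; the variable of
   block k (k = 0: x, 1: y, 2: z) and index i is X_(mxvec_index k i). *)
Definition in_block (n : nat) (k : 'I_3) (v : 'I_(3 * n)) : bool :=
  [exists i : 'I_n, v == mxvec_index k i].

(* J_{k+1}(V): generated by the variables of the two blocks other than k *)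
Definition J (K : fieldType) (n : nat) (k : 'I_3) : {mpoly K[3 * n]} -> Prop :=
  var_ideal (fun v => ~~ in_block k v).

Definition IA (K : fieldType) (n : nat) (p : {mpoly K[3 * n]}) : Prop :=
  forall k : 'I_3, @J K n k p.

(* Main.v *)
Require Import Defs.
From HB Require Import structures.
From mathcomp Require Import all_boot all_order all_algebra.
From mathcomp Require Import mpoly ring zify.
Set Implicit Arguments. Unset Strict Implicit. Unset Printing Implicit Defensive.
Import Order.TTheory GRing.Theory Num.Theory.
Local Open Scope ring_scope.



Section Poly.
Variable (K : fieldType) (N : nat).
Local Notation R := {mpoly K[N]}.
Implicit Types (p q : R) (m : 'X_{1..N}) (Q : pred 'I_N).

Lemma mcoeffXk (k : 'I_N) p m :
  ('X_k * p)@_m = if (0 < m k)%N then p@_(m - U_(k))%MM else 0.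
Proof.
rewrite mulrC; case: ifP => hk.
  have -> : m = (U_(k) + (m - U_(k)))%MM.
    by rewrite addmC submK // lep1mP -lt0n.
  by rewrite mcoeffMX addmC addmK.
apply/eqP; rewrite mcoeff_eq0 (perm_mem (msuppMX _ _)); apply/negP.
case/mapP => m' _ em; move: hk; rewrite em mnmDE mnm1E eqxx; done.
Qed.

Lemma mcoeffXkD (k : 'I_N) p m : ('X_k * p)@_(m + U_(k))%MM = p@_m.
Proof. by rewrite mulrC addmC mcoeffMX. Qed.

Lemma Euler_coef (B : pred 'I_N) p m :
  (\sum_(k < N | B k) 'X_k * p^`M(k))@_m = p@_m *+ (\sum_(k < N | B k) m k)%N.
Proof.
rewrite raddf_sum /= -sumrMnr; apply: eq_bigr => k _.
rewrite mcoeffXk; case: ifP => hk.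
  rewrite mcoeff_mderiv submK ?lep1mP -?lt0n // mnmBE mnm1E eqxx subn1 prednK //.
by move/negbT: hk; rewrite -leqNgt leqn0 => /eqP ->.
Qed.

Definition homd (d : nat) p := forall m, p@_m != 0 -> mdeg m = d.

Lemma homE d p : homogeneous d p <-> homd d p.
Proof.
by split => H m; [rewrite -mcoeff_msupp; apply: H | rewrite mcoeff_msupp; apply: H].
Qed.

Lemma hom0 d : homd d 0.
Proof. by move=> m; rewrite mcoeff0 eqxx. Qed.

Lemma homD d p q : homd d p -> homd d q -> homd d (p + q).
Proof.
move=> hp hq m; rewrite mcoeffD.
case: (eqVneq p@_m 0) => [->|/hp //]; rewrite add0r; exact: hq.
Qed.

Lemma homN d p : homd d p -> homd d (- p).
Proof. by move=> hp m; rewrite mcoeffN oppr_eq0; apply: hp. Qed.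

Lemma homB d p q : homd d p -> homd d q -> homd d (p - q).
Proof. by move=> hp hq; apply: homD => //; apply: homN. Qed.

Lemma homZ d c p : homd d p -> homd d (c *: p).
Proof.
move=> hp m; rewrite mcoeffZ; case: (eqVneq p@_m 0) => [->|/hp //].
by rewrite mulr0 eqxx.
Qed.

Lemma hom_sum d (I : Type) (r : seq I) (P : pred I) (F : I -> R) :
  (forall i, P i -> homd d (F i)) -> homd d (\sum_(i <- r | P i) F i).
Proof.
move=> H; elim/big_rec: _ => [|i x Pi hx]; first exact: hom0.
by apply: homD => //; apply: H.
Qed.

Lemma homS d k p : homd d p -> homd d ((-1) ^+ k * p).
Proof.
move=> hp; elim: k => [|k ih]; first by rewrite expr0 mul1r.
by rewrite exprS mulN1r mulNr; apply: homN.
Qed.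

Lemma homX d (k : 'I_N) p : homd d p -> homd d.+1 ('X_k * p).
Proof.
move=> hp m; rewrite mcoeffXk; case: ifP => hk; last by rewrite eqxx.
move/hp => <-; rewrite -(submK (m:=U_(k)) (m' := m)) ?lep1mP -?lt0n //.
by rewrite mdegD mdeg1 addn1 addmK.
Qed.

Lemma homDer d (k : 'I_N) p : homd d p -> homd d.-1 (p^`M(k)).
Proof.
move=> hp m; rewrite mcoeff_mderiv => h.
have : p@_(m + U_(k)) != 0 by apply: contra h => /eqP ->; rewrite mul0rn.
by move/hp; rewrite mdegD mdeg1 addn1 => <-.
Qed.

Lemma Euler_hom d p : homd d p ->
  \sum_(k < N) 'X_k * p^`M(k) = d%:R *: p.
Proof.
move=> hp; apply/mpolyP => m; rewrite Euler_coef mcoeffZ.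
case: (eqVneq p@_m 0) => [->|/hp <-]; first by rewrite mul0rn mulr0.
by rewrite mdegE mulr_natl.
Qed.

Definition pureP (Q : pred 'I_N) m := [forall v, (m v != 0%N) ==> Q v].

Definition proj (Q : pred 'I_N) p : R :=
  \sum_(m <- msupp p) (if pureP Q m then p@_m else 0) *: 'X_[m].

Lemma mcoeff_proj Q p m : (proj Q p)@_m = if pureP Q m then p@_m else 0.
Proof.
rewrite /proj raddf_sum /=.
rewrite (eq_bigr (fun m' => if m' == m then (if pureP Q m then p@_m else 0) else 0)); last first.
  move=> m' _; rewrite mcoeffZ mcoeffX; case: eqP => [->|_]; first by rewrite mulr1.
  by rewrite mulr0.
rewrite -big_mkcond /=; case: (boolP (m \in msupp p)) => hm.
  by rewrite -big_filter filter_pred1_uniq ?msupp_uniq // big_seq1.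
rewrite big1_seq; last by move=> m' /andP [/eqP -> hm']; rewrite hm' in hm.
by move: hm; rewrite mcoeff_msupp negbK => /eqP ->; case: ifP.
Qed.

Lemma pureP_add1 Q (k : 'I_N) m : Q k -> pureP Q (m + U_(k))%MM = pureP Q m.
Proof.
move=> Qk; apply/forallP/forallP => H v; apply/implyP => hv.
  by apply: (implyP (H v)); rewrite mnmDE addn_eq0 negb_and hv.
case: (eqVneq v k) => [->//|nvk]; apply: (implyP (H v)).
by move: hv; rewrite mnmDE mnm1E [k == v]eq_sym (negbTE nvk) addn0.
Qed.

Lemma pureP_sub1 Q (k : 'I_N) m : (0 < m k)%N ->
  pureP Q m = Q k && pureP Q (m - U_(k))%MM.
Proof.
move=> hk; apply/idP/idP.
  move=> H; have Qk : Q k by apply: (implyP (forallP H k)); rewrite -lt0n.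
  rewrite Qk /=; apply/forallP => v; apply/implyP => hv; apply: (implyP (forallP H v)).
  by apply: contra hv; rewrite mnmBE => /eqP ->.
by case/andP => Qk; rewrite -(pureP_add1 _ Qk) submK // lep1mP -lt0n.
Qed.

Lemma pureP0 Q : pureP Q 0%MM.
Proof. by apply/forallP => v; rewrite mnmE eqxx. Qed.

Lemma proj0 Q : proj Q 0 = 0.
Proof. by apply/mpolyP => m; rewrite mcoeff_proj !mcoeff0; case: ifP. Qed.

Lemma projD Q p q : proj Q (p + q) = proj Q p + proj Q q.
Proof. by apply/mpolyP => m; rewrite mcoeffD !mcoeff_proj mcoeffD; case: ifP; rewrite ?addr0. Qed.

Lemma projN Q p : proj Q (- p) = - proj Q p.
Proof. by apply/mpolyP => m; rewrite mcoeffN !mcoeff_proj mcoeffN; case: ifP; rewrite ?oppr0. Qed.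

Lemma projB Q p q : proj Q (p - q) = proj Q p - proj Q q.
Proof. by rewrite projD projN. Qed.

Lemma projZ Q c p : proj Q (c *: p) = c *: proj Q p.
Proof. by apply/mpolyP => m; rewrite mcoeffZ !mcoeff_proj mcoeffZ; case: ifP; rewrite ?mulr0. Qed.

Lemma proj_sum Q (I : Type) (r : seq I) (P : pred I) (F : I -> R) :
  proj Q (\sum_(i <- r | P i) F i) = \sum_(i <- r | P i) proj Q (F i).
Proof.
elim: r => [|a r ih]; first by rewrite !big_nil proj0.
by rewrite !big_cons; case: (P a); rewrite ?projD ih.
Qed.

Lemma projS Q k p : proj Q ((-1) ^+ k * p) = (-1) ^+ k * proj Q p.
Proof.
elim: k => [|k ih]; first by rewrite !expr0 !mul1r.
by rewrite !exprS !mulN1r !mulNr projN ih.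
Qed.

Lemma projX Q (k : 'I_N) p :
  proj Q ('X_k * p) = if Q k then 'X_k * proj Q p else 0.
Proof.
apply/mpolyP => m; rewrite mcoeff_proj.
case: (ltnP 0 (m k)) => hk.
  rewrite (pureP_sub1 _ hk); case: (Q k) => /=; last by rewrite mcoeff0.
  by rewrite !mcoeffXk hk mcoeff_proj.
have -> : (if Q k then 'X_k * proj Q p else 0)@_m = 0.
  by case: ifP => _; rewrite ?mcoeffXk ?ltnNge ?hk ?mcoeff0.
by case: ifP => _; rewrite ?mcoeffXk ?ltnNge ?hk.
Qed.

Lemma hom_proj d Q p : homd d p -> homd d (proj Q p).
Proof.
by move=> hp m; rewrite mcoeff_proj; case: ifP => _; [apply: hp | rewrite eqxx].
Qed.

Lemma proj_der_same Q (k : 'I_N) p : Q k ->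
  proj Q ((proj Q p)^`M(k)) = (proj Q p)^`M(k).
Proof.
move=> Qk; apply/mpolyP => m; rewrite mcoeff_proj !mcoeff_mderiv mcoeff_proj.
by rewrite pureP_add1 //; case: (pureP Q m); rewrite ?mul0rn.
Qed.

Lemma proj_der_other Q Q' (k : 'I_N) p d :
  (forall v, Q v -> Q' v -> False) -> Q' k -> homd d p -> d != 1%N ->
  proj Q ((proj Q' p)^`M(k)) = 0.
Proof.
move=> disj Q'k hp d1; apply/mpolyP => m; rewrite mcoeff_proj !mcoeff_mderiv mcoeff_proj mcoeff0.
case: ifP => // Pm; case: ifP => Pm'; last by rewrite mul0rn.
have m0 : m = 0%MM.
  apply/mnmP => v; rewrite mnmE; apply/eqP; apply/negP => /negP hv.
  apply: (disj v); first exact: (implyP (forallP Pm v)).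
  by apply: (implyP (forallP Pm' v)); rewrite mnmDE addn_eq0 negb_and hv.
case: (eqVneq p@_(m + U_(k))%MM 0) => [->|/hp]; first by rewrite mul0rn.
by rewrite m0 add0m mdeg1 => e; rewrite -e eqxx in d1.
Qed.

Lemma Euler_proj Q d p : homd d p ->
  \sum_(k < N | Q k) 'X_k * (proj Q p)^`M(k) = d%:R *: proj Q p.
Proof.
move=> hp; apply/mpolyP => m; rewrite Euler_coef mcoeffZ mcoeff_proj.
case: ifP => Pm; last by rewrite mul0rn mulr0.
case: (eqVneq p@_m 0) => [->|/hp <-]; first by rewrite mul0rn mulr0.
rewrite mdegE mulr_natl; congr (_ *+ _).
rewrite [RHS](bigID Q) /= [X in (_ + X)%N]big1 ?addn0 // => v nQv.
by apply/eqP; apply: contraNT nQv => hv; apply: (implyP (forallP Pm v)).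
Qed.

End Poly.



Section Chains.
Variable (K : fieldType) (N : nat).
Local Notation R := {mpoly K[N]}.
Local Notation chain := ({set 'I_N} -> R).
Implicit Types (p q : R) (F : chain) (T : {set 'I_N}) (B : pred 'I_N).

Definition sg T (k : 'I_N) : R := (-1) ^+ #|[set l in T | (l < k)%N]|.

Definition dB B F T : R :=
  \sum_(k < N | (k \notin T) && B k) sg T k * 'X_k * F (k |: T).

Definition hB B F T : R :=
  \sum_(l < N | (l \in T) && B l) sg (T :\ l) l * (F (T :\ l))^`M(l).

Lemma koszul_dE F T : koszul_d F T = dB predT F T.
Proof. by apply: eq_bigl => k; rewrite andbT. Qed.

Lemma sgU1 T (l k : 'I_N) : l \notin T ->
  sg (l |: T) k = (-1) ^+ (l < k)%N * sg T k.
Proof.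
move=> lT; rewrite /sg -exprD; congr (_ ^+ _).
have -> : [set x in l |: T | (x < k)%N] =
  if (l < k)%N then l |: [set x in T | (x < k)%N] else [set x in T | (x < k)%N].
  apply/setP => x; rewrite !inE; case: ifP => lk; rewrite ?inE;
  case: (eqVneq x l) => [->|] //=; by rewrite ?lk ?(negbTE lT).
case: ifP => lk; last by rewrite add0n.
by rewrite cardsU1 inE (negbTE lT).
Qed.

Lemma sg2 T k : sg T k * sg T k = 1.
Proof. by rewrite /sg -exprD -signr_odd oddD addbb expr0. Qed.

Lemma setD1U1 T (k l : 'I_N) : k != l -> (k |: T) :\ l = k |: (T :\ l).
Proof.
move=> kl; apply/setP => x; rewrite !inE; case: (eqVneq x k) => [->|] //=.
by rewrite kl.
Qed.

Lemma sg_swap T (k l : 'I_N) : l \in T -> k \notin T ->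
  sg T k * sg (k |: (T :\ l)) l = - (sg (T :\ l) l * sg (T :\ l) k).
Proof.
move=> lT kT.
have kl : k != l by apply: contraNneq kT => ->.
have hl : l \notin T :\ l by rewrite !inE eqxx.
have hk : k \notin T :\ l by rewrite !inE negb_and kT orbT.
rewrite -{1}(setD1K lT) sgU1 // sgU1 //.
case: (ltngtP l k) => [lk|kl'|e]; last by rewrite (val_inj e) eqxx in kl.
  by rewrite /= expr1 expr0; ring.
by rewrite /= expr1 expr0; ring.
Qed.


Lemma mderiv_sign e (l : 'I_N) q : ((-1) ^+ e * q)^`M(l) = (-1) ^+ e * q^`M(l).
Proof.
elim: e => [|e ih]; first by rewrite !expr0 !mul1r.
by rewrite !exprS !mulN1r !mulNr mderivN ih.
Qed.

Lemma mderivXk (k l : 'I_N) q :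
  ('X_k * q)^`M(l) = 'X_k * q^`M(l) + (if k == l then q else 0).
Proof.
rewrite mderivM mderivX addrC mnm1E; case: eqVneq => [->|_]; last first.
  by rewrite scale0r mul0r addr0.
have -> : (U_(l) - U_(l))%MM = 0%MM by apply/mnmP => v; rewrite !mnmE subnn.
by rewrite mpolyX0 scale1r mul1r.
Qed.

Lemma mderiv_sgX T (k l : 'I_N) q :
  (sg T k * 'X_k * q)^`M(l) =
  sg T k * 'X_k * q^`M(l) + (if k == l then sg T k * q else 0).
Proof.
rewrite -mulrA mderiv_sign mderivXk mulrDr mulrA; congr (_ + _).
by case: ifP; rewrite ?mulr0.
Qed.

Definition cnt T B := #|[set l in T | B l]|.

Lemma homotopy B F T :
  dB B (hB B F) T + hB B (dB B F) T =
  \sum_(k < N | B k) 'X_k * (F T)^`M(k) + (cnt T B)%:R *: F T.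
Proof.
rewrite /dB /hB.
have E1 : forall k, (k \notin T) && B k ->
   sg T k * 'X_k * (\sum_(l < N | (l \in k |: T) && B l)
      sg ((k |: T) :\ l) l * (F ((k |: T) :\ l))^`M(l)) =
   'X_k * (F T)^`M(k) +
   \sum_(l < N | (l \in T) && B l)
      sg T k * 'X_k * (sg (k |: (T :\ l)) l * (F (k |: (T :\ l)))^`M(l)).
  move=> k /andP [kT Bk].
  rewrite (bigD1 k) /=; last by rewrite !inE eqxx.
  rewrite mulrDr setU1K //; congr (_ + _).
    by rewrite -[RHS]mul1r -(sg2 T k); ring.
  rewrite mulr_sumr; apply: eq_big => l.
    rewrite !inE; case: (eqVneq l k) => [->|lk] /=.
      by rewrite andbF (negbTE kT).
    by rewrite andbT.
  by case/andP=> _ lk; rewrite setD1U1 // eq_sym.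
have E2 : forall l, (l \in T) && B l ->
   sg (T :\ l) l * (\sum_(k < N | (k \notin T :\ l) && B k)
      sg (T :\ l) k * 'X_k * F (k |: (T :\ l)))^`M(l) =
   (F T + 'X_l * (F T)^`M(l)) +
   \sum_(k < N | (k \notin T) && B k)
      sg (T :\ l) l * (sg (T :\ l) k * 'X_k * (F (k |: (T :\ l)))^`M(l)).
  move=> l /andP [lT Bl].
  rewrite raddf_sum (bigD1 l) /=; last by rewrite !inE eqxx Bl.
  rewrite mderiv_sgX eqxx setD1K // mulrDr; congr (_ + _).
    by rewrite -[RHS]mul1r -(sg2 (T :\ l) l); ring.
  rewrite mulr_sumr; apply: eq_big => k.
    rewrite !inE; case: (eqVneq k l) => [->|kl] /=; first by rewrite andbF lT.
    by rewrite andbT.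
  by case/andP => _ kl; rewrite mderiv_sgX (negbTE kl) addr0.
rewrite (eq_bigr _ E1) (eq_bigr _ E2) !big_split /=.
set C1 := \sum_(k < N | _) \sum_(l < N | _) _.
set C2 := \sum_(l < N | _) \sum_(k < N | _) _.
have C0 : C1 + C2 = 0.
  rewrite /C2 exchange_big /= /C1 -big_split /=; apply: big1 => k /andP [kT Bk].
  rewrite -big_split /=; apply: big1 => l /andP [lT Bl].
  set D := (F (k |: T :\ l))^`M(l).
  have -> : forall a b c d : R, a * 'X_k * (b * D) + c * (d * 'X_k * D) = (a * b + c * d) * ('X_k * D).
    by move=> a b c d; ring.
  by rewrite sg_swap // addNr mul0r.
have -> : C2 = - C1 by apply/eqP; rewrite -addr_eq0 addrC C0.
have HS : \sum_(k < N | B k) 'X_k * (F T)^`M(k) =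
   \sum_(k < N | (k \notin T) && B k) 'X_k * (F T)^`M(k) +
   \sum_(k < N | (k \in T) && B k) 'X_k * (F T)^`M(k).
  rewrite (bigID (fun k => k \in T)) /= addrC; congr (_ + _); apply: eq_bigl => k; by rewrite andbC.
have HC : \sum_(k < N | (k \in T) && B k) F T = (cnt T B)%:R *: F T.
  rewrite scaler_nat /cnt -sumr_const; apply: eq_bigl => k; by rewrite inE.
rewrite HS HC; ring.
Qed.


Lemma dd B F T : (2%:R : K) != 0 -> dB B (dB B F) T = 0.
Proof.
move=> h2; rewrite /dB.
pose a (k l : 'I_N) : R :=
  if (k \notin T) && B k then
    (if (l \notin k |: T) && B l then
       sg T k * 'X_k * (sg (k |: T) l * 'X_l * F (l |: (k |: T))) else 0)
  else 0.
have HS : \sum_(k < N | (k \notin T) && B k) sg T k * 'X_k *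
   (\sum_(l < N | (l \notin k |: T) && B l) sg (k |: T) l * 'X_l * F (l |: (k |: T)))
   = \sum_(k < N) \sum_(l < N) a k l.
  rewrite big_mkcond /=; apply: eq_bigr => k _; rewrite /a; case: ifP => _; last by rewrite big1.
  by rewrite mulr_sumr big_mkcond /=; apply: eq_bigr => l _; case: ifP.
have anti : forall k l, a l k = - a k l.
  move=> k l; rewrite /a !inE.
  case: (eqVneq l k) => [->|lk]; first by case: ifP => _; rewrite /= ?oppr0.
  rewrite /=.
  case: (boolP (k \in T)) => kT /=; first by case: ifP => _; rewrite ?oppr0.
  case: (boolP (l \in T)) => lT /=; first by case: ifP => _; rewrite ?oppr0.
  case: (B k); case: (B l) => /=; rewrite ?oppr0 //.
  rewrite setUCA sgU1 // sgU1 //.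
  have kl : k != l by rewrite eq_sym.
  case: (ltngtP l k) => [h|h|e]; last by rewrite (val_inj e) eqxx in kl.
    by rewrite /= ?expr1 ?expr0; ring.
  by rewrite /= ?expr1 ?expr0; ring.
rewrite HS.
set S := \sum_(k < N) _.
have SS : S = - S.
  rewrite {1}/S exchange_big /= /S -sumrN; apply: eq_bigr => l _.
  by rewrite -sumrN; apply: eq_bigr => k _; rewrite anti.
have : (2%:R : K) *: S = 0 by rewrite scaler_nat mulr2n {1}SS addNr.
by move/eqP; rewrite scaler_eq0 (negbTE h2) /= => /eqP.
Qed.

Lemma dB_ext B F F' T : F =1 F' -> dB B F T = dB B F' T.
Proof. by move=> e; apply: eq_bigr => k _; rewrite e. Qed.

Lemma hB_ext B F F' T : F =1 F' -> hB B F T = hB B F' T.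
Proof. by move=> e; apply: eq_bigr => k _; rewrite e. Qed.

Lemma dB0 B T : dB B (fun _ => 0) T = 0.
Proof. by apply: big1 => k _; rewrite mulr0. Qed.

Lemma hB0 B T : hB B (fun _ => 0) T = 0.
Proof. by apply: big1 => k _; rewrite mderiv0 mulr0. Qed.

Lemma dBB B F F' T : dB B (fun T => F T - F' T) T = dB B F T - dB B F' T.
Proof. by rewrite /dB -sumrB; apply: eq_bigr => k _; rewrite mulrBr. Qed.

Lemma dB_sum B (I : finType) (G : I -> chain) T :
  dB B (fun T => \sum_(c : I) G c T) T = \sum_(c : I) dB B (G c) T.
Proof.
rewrite /dB exchange_big /=; apply: eq_bigr => k _; by rewrite mulr_sumr.
Qed.

Lemma dBZ B (a : K) F T : dB B (fun T => a *: F T) T = a *: dB B F T.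
Proof.
rewrite /dB scaler_sumr; apply: eq_bigr => k _; by rewrite scalerAr.
Qed.

Lemma hBZ B (a : K) F T : hB B (fun T => a *: F T) T = a *: hB B F T.
Proof.
rewrite /hB scaler_sumr; apply: eq_bigr => k _; by rewrite mderivZ scalerAr.
Qed.

Lemma proj_dB Q F T :
  proj Q (dB predT F T) = dB Q (fun T => proj Q (F T)) T.
Proof.
rewrite /dB proj_sum big_mkcond [RHS]big_mkcond /=; apply: eq_bigr => k _.
rewrite andbT; case: (k \notin T) => /=; last by rewrite ?proj0.
rewrite -mulrA /sg projS projX; case: (Q k); by rewrite ?mulr0 ?mulrA.
Qed.

Definition supp F (i : nat) := forall T, #|T| != i -> F T = 0.

Lemma supp_hB B F i : supp F i -> supp (hB B F) i.+1.
Proof.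
move=> sF T hT; apply: big1 => l /andP [lT _]; rewrite sF ?mderiv0 ?mulr0 //.
by apply: contra hT; rewrite (cardsD1 l T) lT => /eqP ->.
Qed.

Lemma supp_dB B F i : supp F i.+1 -> supp (dB B F) i.
Proof.
move=> sF T hT; apply: big1 => k /andP [kT _]; rewrite sF ?mulr0 //.
by rewrite cardsU1 kT add1n eqSS.
Qed.

Definition homc F d := forall T, homd d (F T).

Lemma homc_hB B F d : homc F d -> homc (hB B F) d.-1.
Proof.
move=> hF T; apply: hom_sum => l _; apply: homS; exact: homDer.
Qed.

Lemma homc_dB B F d : homc F d -> homc (dB B F) d.+1.
Proof.
move=> hF T; apply: hom_sum => l _; rewrite -mulrA; apply: homS; exact: homX.
Qed.

End Chains.



Section VI.
Variable (K : fieldType) (N : nat).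
Local Notation R := {mpoly K[N]}.
Implicit Types (p q : R) (m : 'X_{1..N}) (Q : pred 'I_N).

Lemma vi0 (S : pred 'I_N) : var_ideal S (0 : R).
Proof. by exists (fun _ => 0); rewrite big1 // => v _; rewrite mul0r. Qed.

Lemma viD (S : pred 'I_N) p q : var_ideal S p -> var_ideal S q -> var_ideal S (p + q).
Proof.
case=> c1 -> [c2 ->]; exists (fun v => c1 v + c2 v).
by rewrite -big_split /=; apply: eq_bigr => v _; rewrite mulrDl.
Qed.

Lemma vimono (S : pred 'I_N) (v : 'I_N) m (a : K) :
  S v -> (m v != 0)%N -> var_ideal S (a *: 'X_[m] : R).
Proof.
move=> Sv mv; exists (fun w => if w == v then a *: 'X_[(m - U_(v))%MM] else 0).
rewrite (bigD1 v) //= eqxx big1 ?addr0; last first.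
  by move=> w /andP [_ /negbTE ->]; rewrite mul0r.
by rewrite -scalerAl -mpolyXD submK // lep1mP.
Qed.

Lemma proj_vi Q p : proj Q p = 0 -> var_ideal (fun v => ~~ Q v) p.
Proof.
move=> hp; rewrite (mpolyE p) big_seq.
elim/big_ind: _ => [|x y|m hm]; [exact: vi0|exact: viD|].
have : (proj Q p)@_m = 0 by rewrite hp mcoeff0.
rewrite mcoeff_proj; case: ifP => Pm; first by move: hm; rewrite mcoeff_msupp => /eqP.
move=> _; move/negbT: Pm; case/forallPn => v; rewrite negb_imply => /andP [h1 h2].
exact: (@vimono (fun w => ~~ Q w) v m _ h2 h1).
Qed.

Lemma vi_proj Q p : var_ideal (fun v => ~~ Q v) p -> proj Q p = 0.
Proof.
case=> c ->; rewrite proj_sum; apply: big1 => v nQv.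
by rewrite mulrC projX (negbTE nQv).
Qed.

End VI.



Section Main.
Variable (K : fieldType) (n : nat).
Hypothesis char0 : [pchar K] =i pred0.
Local Notation N := (3 * n)%N.
Local Notation R := {mpoly K[N]}.

Lemma natr_neq0 (k : nat) : (0 < k)%N -> (k%:R : K) != 0.
Proof. by move=> hk; have [h _] := pcharf0P K; rewrite (h char0 k) -lt0n. Qed.

Lemma blk_disj (b c : 'I_3) (v : 'I_N) : in_block b v -> in_block c v -> b = c.
Proof.
case/existsP => i /eqP -> /existsP [i' /eqP].
by move/cast_ord_inj/enum_rank_inj => [].
Qed.

Lemma blk_cover (v : 'I_N) : exists c : 'I_3, in_block c v.
Proof.
by case/mxvec_indexP: v => c i; exists c; apply/existsP; exists i.
Qed.

Lemma IA_proj (p : R) : IA p -> forall c, proj (in_block c) p = 0.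
Proof. by move=> h c; apply: vi_proj; exact: (h c). Qed.

Lemma proj_IA (p : R) : (forall c, proj (in_block c) p = 0) -> IA p.
Proof. by move=> h c; apply: proj_vi; exact: h. Qed.

Lemma cntU1 (T : {set 'I_N}) (k : 'I_N) (Q : pred 'I_N) :
  k \notin T -> Q k -> cnt (k |: T) Q = (cnt T Q).+1.
Proof.
move=> kT Qk; rewrite /cnt.
have -> : [set l in k |: T | Q l] = k |: [set l in T | Q l].
  apply/setP => x; rewrite !inE; case: eqVneq => [->|] //=; by rewrite Qk.
by rewrite cardsU1 inE (negbTE kT).
Qed.

Lemma hom1_IA (p : R) : homd 1 p -> IA p -> p = 0.
Proof.
move=> hp /IA_proj hc; apply/mpolyP => m; rewrite mcoeff0.
case: (eqVneq p@_m 0) => [//|/hp md].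
have /mdeg1P [v /eqP em] : mdeg m == 1%N by rewrite md.
have [c cv] := blk_cover v.
have := congr1 (mcoeff m) (hc c); rewrite mcoeff_proj mcoeff0.
suff -> : pureP (in_block c) m by [].
apply/forallP => w; apply/implyP; rewrite em mnm1E; case: (eqVneq v w) => [<-|] //.
Qed.

Lemma reg_upper i j : (i + 3 <= j)%N -> tor_vanishes (@IA K n) i j.
Proof.
move=> hij F hF dF0.
set d := (j - i)%N.
have d3 : (3 <= d)%N by rewrite /d; lia.
have Fsupp : supp F i.
  by move=> T hT; have [_ [+ _]] := hF T; rewrite (negbTE hT).
have Fhom : homc F d by move=> T; have [_ [_ /homE]] := hF T.
have FIA : forall T, IA (F T) by move=> T; have [] := hF T.
have dF : forall T, dB predT F T = 0 by move=> T; rewrite -koszul_dE dF0.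
have hj : (j%:R : K) != 0 by apply: natr_neq0; lia.
have h2 : (2%:R : K) != 0 by apply: natr_neq0.
pose y T := (j%:R : K)^-1 *: hB predT F T.
have dy : forall T, dB predT y T = F T.
  move=> T; rewrite /y dBZ.
  have := homotopy predT F T.
  rewrite (hB_ext _ _ dF) hB0 addr0 => ->.
  have -> : \sum_(k < N | predT k) 'X_k * (F T)^`M(k) = \sum_(k < N) 'X_k * (F T)^`M(k).
    by apply: eq_bigl.
  rewrite (Euler_hom (Fhom T)).
  have -> : cnt T predT = #|T|.
    rewrite /cnt (_ : [set l in T | predT l] = T) //.
    by apply/setP => x; rewrite !inE /= andbT.
  case: (eqVneq #|T| i) => [->|hT]; last by rewrite Fsupp // !scaler0 addr0 scaler0.
  by rewrite -scalerDl -natrD /d subnK ?scalerA ?mulVf ?scale1r //; lia.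
have ysupp : supp y i.+1 by move=> T hT; rewrite /y (supp_hB _ Fsupp hT) scaler0.
have yhom : homc y d.-1.
  by move=> T; rewrite /y; apply: homZ; exact: (homc_hB (B := predT) Fhom).
pose w (c : 'I_3) T := proj (in_block c) (y T).
pose u (c : 'I_3) T := (((d - 2 + cnt T (in_block c))%:R : K)^-1) *: hB (in_block c) (w c) T.
pose G T := y T - \sum_(c < 3) dB predT (u c) T.
have wsupp : forall c, supp (w c) i.+1 by move=> c T hT; rewrite /w ysupp // proj0.
have usupp : forall c, supp (u c) i.+2.
  by move=> c T hT; rewrite /u (supp_hB _ (wsupp c) hT) scaler0.
have uhom : forall c, homc (u c) d.-1.-1.
  move=> c T; apply: homZ; apply: (homc_hB (B := in_block c) (F := w c) (d := d.-1)).
  by move=> T'; apply: hom_proj; exact: yhom.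
exists G; split; last first.
  move=> T; rewrite koszul_dE /G (dBB predT y (fun T => \sum_(c < 3) dB predT (u c) T)).
  rewrite (dB_sum predT (fun c T => dB predT (u c) T)) dy big1 ?subr0 // => c _.
  exact: dd.
move=> S; split; [|split].
- apply: proj_IA => c.
  have puc : forall T, proj (in_block c) (u c T) = u c T.
    move=> T; rewrite /u projZ /hB proj_sum; congr (_ *: _); apply: eq_bigr => l /andP [_ hl].
    by rewrite projS /w proj_der_same.
  have pub : forall b T, b != c -> proj (in_block c) (u b T) = 0.
    move=> b T hb; rewrite /u projZ /hB proj_sum big1 ?scaler0 // => l /andP [_ hl].
    rewrite projS /w (proj_der_other (Q' := in_block b) _ hl (yhom _)) ?mulr0 //.
      by move=> v h1 h2'; have e := blk_disj h2' h1; rewrite e eqxx in hb.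
    by apply/eqP; lia.
  have dwc : forall T, dB (in_block c) (w c) T = 0.
    by move=> T; rewrite /w -proj_dB dy; exact: IA_proj.
  have duc : forall T, dB (in_block c) (u c) T = w c T.
    move=> T.
    have -> : dB (in_block c) (u c) T =
       (((d - 2 + cnt T (in_block c)).+1%:R : K)^-1) *: dB (in_block c) (hB (in_block c) (w c)) T.
      rewrite /dB scaler_sumr; apply: eq_bigr => k /andP [kT hk].
      by rewrite /u cntU1 // addnS scalerAr.
    have := homotopy (in_block c) (w c) T.
    rewrite (hB_ext _ _ dwc) hB0 addr0 => ->.
    rewrite /w (Euler_proj _ (yhom T)) -scalerDl -natrD.
    have -> : (d.-1 + cnt T (in_block c))%N = (d - 2 + cnt T (in_block c)).+1 by lia.
    by rewrite scalerA mulVf ?scale1r //; apply: natr_neq0.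
  rewrite /G projB proj_sum.
  under eq_bigr => b _ do rewrite proj_dB.
  rewrite (bigD1 c) //= big1 ?addr0; last first.
    move=> b hb; rewrite (dB_ext _ _ (F' := fun _ => 0)) ?dB0 //.
    by move=> T; exact: pub.
  by rewrite (dB_ext _ _ puc) duc subrr.
- case: ifP => hS; first by left; lia.
  rewrite /G ysupp ?hS // big1 ?subr0 // => c _.
  by rewrite (supp_dB predT (usupp c)) // hS.
- apply/homE; rewrite subnS -/d; apply: homB; first exact: yhom.
  apply: hom_sum => c _.
  have hdu := homc_dB (B := predT) (uhom c).
  have e : (d.-1.-1).+1 = d.-1 by lia.
  by rewrite e in hdu; exact: hdu.
Qed.

Lemma reg_lower (n_pos : (0 < n)%N) (s : int) : reg_bound (@IA K n) s -> (2 <= s)%R.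
Proof.
move=> hbd; rewrite leNgt; apply/negP => hs.
have tv : tor_vanishes (@IA K n) 0 2 by apply: hbd; lia.
pose i0 : 'I_n := Ordinal n_pos.
pose a : 'I_N := mxvec_index (0 : 'I_3) i0.
pose b : 'I_N := mxvec_index (1 : 'I_3) i0.
pose F0 (S : {set 'I_N}) : R := if S == set0 then 'X_a * 'X_b else 0.
have ha : in_block 0 a by apply/existsP; exists i0.
have hb : in_block 1 b by apply/existsP; exists i0.
have pab : forall c : 'I_3, proj (in_block c) ('X_a * 'X_b : R) = 0.
  move=> c; rewrite projX; case: ifP => hca //; rewrite -['X_b]mulr1 projX; case: ifP => hcb; last by rewrite mulr0.
  by have := blk_disj ha hca; have := blk_disj hb hcb => <-.
have homab : homd 2 ('X_a * 'X_b : R).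
  have h1 : homd 0 (1 : R).
    move=> m; rewrite -mpolyC1 mcoeffC.
    case: (eqVneq m 0%MM) => [->|ne]; first by rewrite mdeg0.
    by rewrite mulr0 eqxx.
  have H := homX (k := a) (homX (k := b) h1); by rewrite mulr1 in H.
have chainF : koszul_chain (@IA K n) 0 2 F0.
  move=> S; rewrite /F0; case: (eqVneq S set0) => [->|hS].
    split; first by apply: proj_IA => c; exact: pab.
    by split; [rewrite cards0 eqxx; left | apply/homE; exact: homab].
  split; first by apply: proj_IA => c; exact: proj0.
  by split; [case: ifP; auto | apply/homE; exact: hom0].
have dF : koszul_d F0 =1 (fun _ => 0).
  move=> T; apply: big1 => k _; rewrite /F0.
  have /negbTE -> : k |: T != set0 by apply/set0Pn; exists k; rewrite setU11.
  by rewrite mulr0.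
have [G [hG dG]] := tv F0 chainF dF.
have G0 : forall S, G S = 0.
  by move=> S; have [hIA [_ hh]] := hG S; apply: hom1_IA hIA; move/homE: hh.
have := dG set0; rewrite /F0 eqxx koszul_dE /dB big1 => [|k _]; last by rewrite G0 mulr0.
move/(congr1 (mcoeff (U_(a) + U_(b))%MM)); rewrite -mpolyXD mcoeffX eqxx mcoeff0.
by move/eqP; rewrite eq_sym oner_eq0.
Qed.

End Main.

Theorem mainTheorem7 (K : fieldType) (n : nat)
  (char0 : [pchar K] =i pred0) (n_pos : (0 < n)%N) :
  cm_regularity_is (@IA K n) 2.
Proof.
split; first by move=> i j hij; apply: reg_upper => //; lia.
by move=> s'; exact: reg_lower.
Qed.
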